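(* Let $\mathbf h,\mathbf g\in\mathbb C^{N}$ be nonzero, $P_t>0$, $\eta>0$, and consider $$\max_{\mathbf f\in\mathbb C^N}\ |\mathbf h^{H}\mathbf f|^2\quad\text{s.t.}\quad \|\mathbf f\|^2\le P_t,\quad |\mathbf g^{H}\mathbf f|^2\ge\eta .$$ An optimal solution has the form $\mathbf f=a\mathbf h+b\mathbf g$ with $a,b\in\mathbb C$, where: Case 1: if $\eta\le \dfrac{P_t|\mathbf g^{H}\mathbf h|^2}{\|\mathbf h\|^2}$, then $|a|=\dfrac{\sqrt{P_t}}{\|\mathbf h\|}$, $b=0$, with the phase of $a$ arbitrary. Case 2: if $\dfrac{P_t|\mathbf g^{H}\mathbf h|^2}{\|\mathbf h\|^2}\le\eta\le P_t\|\mathbf g\|^2$ (and $\mathbf h,\mathbf g$ are linearly independent), then $$|a|=\sqrt{\frac{P_t\|\mathbf g\|^2-\eta}{\|\mathbf h\|^2\|\mathbf g\|^2-|\mathbf h^{H}\mathbf g|^2}},\qquad |b|=\frac{\sqrt\eta}{\|\mathbf g\|^2}-\frac{|\mathbf h^{H}\mathbf g|}{\|\mathbf g\|^2}|a|,$$ with phases satisfying $\angle(a)-\angle(b)=\angle(\mathbf h^{H}\mathbf g)$. Case 3: if $\eta>P_t\|\mathbf g\|^2$, the problem is infeasible. *)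

(* Defs.v *)
From HB Require Import structures.
From mathcomp Require Import all_boot all_order all_algebra.
From mathcomp Require Import complex.
From mathcomp Require Import reals.
Set Implicit Arguments. Unset Strict Implicit. Unset Printing Implicit Defensive.
Import Order.TTheory GRing.Theory Num.Theory.
Local Open Scope ring_scope.

Section Defs.
Variable C : numClosedFieldType.
Variable N : nat.

Definition dotc (u v : 'cV[C]_N) : C := \sum_(i < N) (u i 0)^* * v i 0.

Definition norm2 (v : 'cV[C]_N) : C := dotc v v.

Definition vnorm (v : 'cV[C]_N) : C := sqrtC (norm2 v).

Definition feasible (g : 'cV[C]_N) (Pt eta : C) (f : 'cV[C]_N) : Prop :=
  norm2 f <= Pt /\ eta <= `|dotc g f| ^+ 2.

Definition optimal (h g : 'cV[C]_N) (Pt eta : C) (f : 'cV[C]_N) : Prop :=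
  feasible g Pt eta f /\
  forall f' : 'cV[C]_N, feasible g Pt eta f' -> `|dotc h f'| ^+ 2 <= `|dotc h f| ^+ 2.

Definition lin_indep2 (h g : 'cV[C]_N) : Prop :=
  forall a b : C, a *: h + b *: g = 0 -> a = 0 /\ b = 0.
End Defs.

(* u is a phase (unit-modulus factor) of z: z = |z| u, |u| = 1.
   For z = 0 every unit u is a phase (angle arbitrary). *)
Definition is_phase (C : numClosedFieldType) (z u : C) : Prop :=
  `|u| = 1 /\ z = `|z| * u.

Definition angle_diff_eq (C : numClosedFieldType) (a b c : C) : Prop :=
  exists ua ub uc : C,
    [/\ is_phase a ua, is_phase b ub, is_phase c uc & ua / ub = uc].

(* Main.v *)
Require Import Defs.
From HB Require Import structures.
From mathcomp Require Import all_boot all_order all_algebra.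
From mathcomp Require Import complex.
From mathcomp Require Import reals.
From mathcomp Require Import ring lra.
Import Order.TTheory GRing.Theory Num.Theory.
Set Implicit Arguments. Unset Strict Implicit.
Local Open Scope ring_scope.

Section Gen.
Variable C : numClosedFieldType.
Variable N : nat.
Implicit Types u v w x y h g f : 'cV[C]_N.

Lemma dotcDl u v w : dotc (u + v) w = dotc u w + dotc v w.
Proof. rewrite /dotc -big_split; apply: eq_bigr=> i _; by rewrite mxE rmorphD mulrDl. Qed.
Lemma dotcDr u v w : dotc u (v + w) = dotc u v + dotc u w.
Proof. rewrite /dotc -big_split; apply: eq_bigr=> i _; by rewrite mxE mulrDr. Qed.
Lemma dotcZl a u v : dotc (a *: u) v = a^* * dotc u v.
Proof. rewrite /dotc mulr_sumr; apply: eq_bigr=> i _; by rewrite mxE rmorphM mulrA. Qed.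
Lemma dotcZr a u v : dotc u (a *: v) = a * dotc u v.
Proof. rewrite /dotc mulr_sumr; apply: eq_bigr=> i _; by rewrite mxE mulrCA. Qed.
Lemma dotcC u v : dotc v u = (dotc u v)^*.
Proof. rewrite /dotc rmorph_sum; apply: eq_bigr=> i _. by rewrite rmorphM /= conjCK mulrC. Qed.
Lemma dotc_real u : (dotc u u)^* = dotc u u.
Proof. by rewrite -dotcC. Qed.
Lemma norm2_ge0 u : 0 <= norm2 u.
Proof. rewrite /norm2 /dotc; apply: sumr_ge0 => i _; by rewrite -normCKC exprn_ge0. Qed.
Lemma norm2_eq0 u : norm2 u = 0 -> u = 0.
Proof.
rewrite /norm2 /dotc => /eqP; rewrite psumr_eq0 => [/allP H|i _]; last by rewrite -normCKC exprn_ge0.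
apply/matrixP => i j; rewrite (ord1 j) mxE.
have := H i (mem_index_enum _); rewrite /= -normCKC expf_eq0 /= normr_eq0 => /eqP //.
Qed.

Lemma cs_id x y : dotc (dotc x x *: y + (- dotc x y) *: x) (dotc x x *: y + (- dotc x y) *: x)
  = dotc x x * (dotc x x * dotc y y - dotc x y * (dotc x y)^*).
Proof.
rewrite !dotcDl !dotcDr !dotcZl !dotcZr (dotcC x y) !rmorphN /= dotc_real. ring.
Qed.

Lemma gram h g f :
  let H := dotc h h in let G := dotc g g in let F := dotc f f in
  let c := dotc h g in let p := dotc h f in let q := dotc g f in
  let K := H * G - c * c^* in
  dotc (K *: f + (- (G * p - c * q)) *: h + (- (H * q - c^* * p)) *: g)
       (K *: f + (- (G * p - c * q)) *: h + (- (H * q - c^* * p)) *: g)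
  = K * (K * F - G * (p * p^*) - H * (q * q^*) + (c * p^* * q + (c * p^* * q)^*)).
Proof.
move=> H G F c p q K.
rewrite !dotcDl !dotcDr !dotcZl !dotcZr (dotcC h f) (dotcC g f) (dotcC h g).
rewrite /K /H /G /F /= !(rmorphN, rmorphB, rmorphM) /= !(conjCK, dotc_real). rewrite /c /p /q. ring.
Qed.

Lemma dotc0l y : dotc (0 : 'cV[C]_N) y = 0.
Proof. by rewrite /dotc big1 // => i _; rewrite mxE rmorph0 mul0r. Qed.

Lemma norm2_gt0 x : x != 0 -> 0 < dotc x x.
Proof.
move=> hx; rewrite lt_def norm2_ge0 andbT; apply/eqP => /norm2_eq0 e.
by rewrite e eqxx in hx.
Qed.

Lemma cs x y : `|dotc x y| ^+ 2 <= dotc x x * dotc y y.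
Proof.
have [->|hx] := eqVneq x 0; first by rewrite dotc0l normr0 expr0n /= dotc0l mul0r.
have X0 := norm2_gt0 hx.
have := norm2_ge0 (dotc x x *: y + (- dotc x y) *: x); rewrite /norm2 cs_id.
by rewrite pmulr_rge0 // subr_ge0 normCK.
Qed.

Lemma gram_ineq h g f :
  let H := dotc h h in let G := dotc g g in let F := dotc f f in
  let c := dotc h g in let p := dotc h f in let q := dotc g f in
  let K := H * G - `|c| ^+ 2 in
  0 < K ->
  G * `|p| ^+ 2 + H * `|q| ^+ 2 <= K * F + 2 * (`|c| * `|p| * `|q|).
Proof.
move=> H G F c p q K K0.
have := norm2_ge0 ((H * G - c * c^*) *: f + (- (G * p - c * q)) *: h + (- (H * q - c^* * p)) *: g).
rewrite /norm2 gram -/H -/G -/F -/c -/p -/q -normCK -/K pmulr_rge0 // => h1.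
have h2 : c * p^* * q + (c * p^* * q)^* <= 2 * (`|c| * `|p| * `|q|).
  have := leif_Re_Creal (c * p^* * q); move=> [+ _].
  rewrite ReE !normrM norm_conjC ler_pdivrMr ?ltr0n // => h3.
  by rewrite [2 * _]mulrC.
rewrite -!normCK in h1.
rewrite -subr_ge0. set w := c * p^* * q + (c * p^* * q)^*.
have h4 : 0 <= 2 * (`|c| * `|p| * `|q|) - w by rewrite subr_ge0.
have -> : K * F + 2 * (`|c| * `|p| * `|q|) - (G * `|p| ^+ 2 + H * `|q| ^+ 2) =
   (K * F - G * `|p| ^+ 2 - H * `|q| ^+ 2 + w) + (2 * (`|c| * `|p| * `|q|) - w) by ring.
exact: addr_ge0.
Qed.
Lemma conj_unit (u : C) : `|u| = 1 -> u^* = u^-1.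
Proof. by move=> n; rewrite invC_norm n expr1n invr1 mul1r. Qed.
End Gen.
Section RR.
Variable R : realType.
Lemma toRe (x : R[i]) : x \is Num.real -> x = (complex.Re x)%:C%C.
Proof. by move=> /RRe_real ->. Qed.
Lemma Re_ge0 (x : R[i]) : 0 <= x -> 0 <= complex.Re x.
Proof. by rewrite lecE => /andP[]. Qed.
Lemma Re_gt0 (x : R[i]) : 0 < x -> 0 < complex.Re x.
Proof. by rewrite ltcE => /andP[]. Qed.
End RR.
Section RR2.
Variable R : realType.
Lemma leR (x y : R) : (x%:C <= y%:C)%C -> x <= y. Proof. by rewrite lecR. Qed.
Lemma ltR (x y : R) : (x%:C < y%:C)%C -> x < y. Proof. by rewrite ltcR. Qed.
Lemma eqR (x y : R) : (x%:C = y%:C)%C -> x = y. Proof. exact: complexI. Qed.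
End RR2.
Lemma ex_real (R : realType) (x : R[i]) : x \is Num.real -> exists r : R, x = (r%:C)%C.
Proof. by move/complex_realP. Qed.

Lemma real_main (R : realFieldType) (H G F Pt e c p q A B s : R) :
  0 < G -> 0 < H * G - c ^+ 2 -> F <= Pt -> e <= q ^+ 2 -> s ^+ 2 = e -> 0 <= s ->
  A ^+ 2 * (H * G - c ^+ 2) = Pt * G - e -> B * G = s - c * A ->
  G * p ^+ 2 + H * q ^+ 2 <= (H * G - c ^+ 2) * F + 2 * (c * p * q) ->
  0 <= p -> 0 <= q -> 0 <= A -> 0 <= B -> 0 <= c ->
  p ^+ 2 <= (A * H + B * c) ^+ 2.
Proof.
move=> G0 K0 FP eq se s0 hA hB hg p0 q0 A0 B0 c0.
set K := H * G - c ^+ 2 in K0 hA hg.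
have sq : s <= q by rewrite -(ler_pXn2r (_ : 0 < 2)%N) ?nnegrE // se.
have cAs : c * A <= s by have := mulr_ge0 B0 (ltW G0); lra.
have key : (G * p - c * q) ^+ 2 <= K * (A ^+ 2 * K - (q - s) * (2 * s + (q - s))).
  have e1 : G * (G * p ^+ 2 + H * q ^+ 2) = (G * p - c * q) ^+ 2 + K * q ^+ 2 + 2 * G * c * p * q.
    rewrite /K; ring.
  have h1 : G * (G * p ^+ 2 + H * q ^+ 2) <= G * (K * F + 2 * (c * p * q)) by rewrite ler_pM2l.
  have h2 : K * F <= K * Pt by rewrite ler_pM2l.
  have e2 : Pt * G = A ^+ 2 * K + s ^+ 2 by rewrite hA se; ring.
  nra.
have Gp : G * p <= A * K + c * s.
  rewrite leNgt; apply/negP => hd.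
  set x := q - s in key; have x0 : 0 <= x by rewrite /x; lra.
  set d := G * p - c * s - A * K.
  have ed : G * p - c * q = d + (A * K - c * x) by rewrite /d /x; ring.
  rewrite ed in key.
  have d0 : 0 < d by rewrite /d; lra.
  case: (lerP 0 (A * K - c * x)) => hy.
  - have hy2 : (A * K - c * x) ^+ 2 < (d + (A * K - c * x)) ^+ 2 by nra.
    have t0 : 0 <= x * (s - c * A) by apply: mulr_ge0 => //; lra.
    have t1 : 0 <= K * (x * (s - c * A)) by apply: mulr_ge0 => //; lra.
    have t2 : 0 <= x ^+ 2 * (c ^+ 2 + K) by apply: mulr_ge0; nra.
    have t3 : (A * K - c * x) ^+ 2 - K * (A ^+ 2 * K - x * (2 * s + x)) =
      2 * (K * (x * (s - c * A))) + x ^+ 2 * (c ^+ 2 + K) by ring.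
    lra.
  - have cx : A * K < c * x by lra.
    have sx : c * A * x <= s * x by apply: ler_wpM2r.
    have AK : A * (A * K) <= A * (c * x) by apply: ler_wpM2l => //; lra.
    have x0' : 0 < x by nra.
    have AK0 : 0 <= A ^+ 2 * K by apply: mulr_ge0 => //; [exact: sqr_ge0 | lra].
    have xx : 0 < x * x by apply: mulr_gt0.
    have neg : A ^+ 2 * K - x * (2 * s + x) < 0.
      have -> : A ^+ 2 * K - x * (2 * s + x) = A ^+ 2 * K - 2 * (s * x) - x * x by ring.
      have -> : A ^+ 2 * K = A * (A * K) by ring.
      have e3 : A * (c * x) = c * A * x by ring. rewrite e3 in AK.
      lra.
    have : K * (A ^+ 2 * K - x * (2 * s + x)) < 0 by rewrite pmulr_rlt0.
    have := sqr_ge0 (d + (A * K - c * x)). lra.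
have V0 : 0 <= A * H + B * c.
  have AH : 0 <= A * H.
    apply: mulr_ge0 => //. have : 0 < H * G by have := sqr_ge0 c; move: K0; rewrite /K; lra. by rewrite pmulr_lgt0 // => /ltW.
  have := mulr_ge0 B0 c0. lra.
have pV : p <= A * H + B * c.
  rewrite -(ler_pM2l G0). have -> : G * (A * H + B * c) = A * K + c * s.
    have -> : G * (A * H + B * c) = A * (H * G) + (B * G) * c by ring. rewrite hB /K; ring.
  exact: Gp.
by rewrite ler_pXn2r ?nnegrE.
Qed.

Local Open Scope complex_scope.

Theorem proposition2 (R : realType) (N : nat) (h g : 'cV[R[i]]_N) (Pt eta : R[i])
  (hh : h != 0) (hg : g != 0) (hPt : 0 < Pt) (heta : 0 < eta) :
  let H := norm2 h in
  let G := norm2 g in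
  (* Case 1 *)
  (eta <= Pt * `|dotc g h| ^+ 2 / H ->
     forall a : R[i], `|a| = sqrtC Pt / vnorm h ->
       optimal h g Pt eta (a *: h + 0 *: g)) /\
  (* Case 2 *)
  (Pt * `|dotc g h| ^+ 2 / H <= eta -> eta <= Pt * G -> lin_indep2 h g ->
     forall a b : R[i],
       `|a| = sqrtC ((Pt * G - eta) / (H * G - `|dotc h g| ^+ 2)) ->
       `|b| = sqrtC eta / G - `|dotc h g| / G * `|a| ->
       angle_diff_eq a b (dotc h g) ->
       optimal h g Pt eta (a *: h + b *: g)) /\
  (* Case 3 *)
  (Pt * G < eta -> forall f : 'cV[R[i]]_N, ~ feasible g Pt eta f).
Proof.
move=> H G.
have hH : 0 < H := norm2_gt0 hh.
have hG : 0 < G := norm2_gt0 hg.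
have H0 : H != 0 by rewrite gt_eqF.
have G0 : G != 0 by rewrite gt_eqF.
split; [|split].
- move=> he a ha.
  have a2 : `|a| ^+ 2 = Pt / H by rewrite ha expr_div_n /vnorm !sqrtCK.
  rewrite scale0r addr0.
  have n2 : norm2 (a *: h) = Pt.
    by rewrite /norm2 dotcZl dotcZr mulrA -normCKC a2 divfK.
  split; first split.
  + by rewrite n2.
  + by rewrite dotcZr normrM exprMn a2 mulrAC.
  + move=> f' [hf' _]. rewrite dotcZr normrM exprMn a2 ger0_norm; last exact: norm2_ge0.
    apply: le_trans (cs h f') _.
    rewrite -/(norm2 h) -/H expr2 mulrA divfK // mulrC ler_pM2r //.
- move=> hle1 hle2 hind a b ha hb [ua [ub [uc [[nua ea] [nub eb] [nuc ec] eu]]]].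
  have ub0 : ub != 0 by rewrite -normr_eq0 nub oner_eq0.
  have uc0 : uc != 0 by rewrite -normr_eq0 nuc oner_eq0.
  have eua : ua = uc * ub by rewrite -eu divfK.
  set c := dotc h g in ha hb ec *.
  have dgh : dotc g h = (c^*)%R by rewrite dotcC.
  set cm := `|c| in ha hb ec *.
  set A := `|a| in ha hb ea *.
  set B := `|b| in hb eb *.
  set K := H * G - cm ^+ 2 in ha.
  have cm0 : 0 <= cm by exact: normr_ge0.
  have A0 : 0 <= A by exact: normr_ge0.
  have B0 : 0 <= B by exact: normr_ge0.
  have cmr : (cm^*)%R = cm by rewrite conj_Creal // normr_real.
  have Ac : (A^*)%R = A by rewrite conj_Creal // normr_real.
  have Bc : (B^*)%R = B by rewrite conj_Creal // normr_real.
  have Hc : (H^*)%R = H by exact: dotc_real.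
  have Gc : (G^*)%R = G by exact: dotc_real.
  have K0 : 0 < K.
    rewrite lt_def; apply/andP; split; last first.
      by rewrite subr_ge0; have := cs h g; rewrite -/c.
    apply/eqP => eK.
    have := cs_id g h; rewrite -/(norm2 g) -/G dgh conjCK -/(norm2 h) -/H.
    rewrite -normCKC -/cm (mulrC G H) -/K eK mulr0 => /norm2_eq0 /(hind _ _) [].
    by move=> /eqP; rewrite (negPf G0).
  have K00 : K != 0 by rewrite gt_eqF.
  set s := sqrtC eta in hb.
  have s2 : s ^+ 2 = eta by rewrite sqrtCK.
  have s0 : 0 <= s by rewrite sqrtC_ge0 ltW.
  have A2 : A ^+ 2 * K = Pt * G - eta by rewrite ha sqrtCK divfK.
  have hBG : B * G = s - cm * A by rewrite hb; field.
  have cu : (uc^*)%R = uc^-1 := conj_unit nuc.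
  have cub : (ub^*)%R = ub^-1 := conj_unit nub.
  have gf0 : dotc g (a *: h + b *: g) = ub * (A * cm + B * G).
    rewrite dotcDr !dotcZr dgh -/(norm2 g) -/G ea eb ec eua !rmorphM /= cmr cu.
    by field.
  have hf0 : dotc h (a *: h + b *: g) = ua * (A * H + B * cm).
    rewrite dotcDr !dotcZr -/(norm2 h) -/H -/c ea eb ec eua. ring.
  have n2 : norm2 (a *: h + b *: g) = Pt.
    transitivity (A ^+ 2 * H + 2 * (A * B * cm) + B ^+ 2 * G).
      rewrite /norm2 !dotcDl !dotcDr !dotcZl !dotcZr -/(norm2 h) -/H -/(norm2 g) -/G -/c dgh.
      rewrite ea eb ec eua !rmorphM /= Ac Bc cmr cu cub.
      by field; rewrite ub0 uc0.
    apply: (mulfI G0).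
    have -> : G * (A ^+ 2 * H + 2 * (A * B * cm) + B ^+ 2 * G) =
       A ^+ 2 * K + (B * G + cm * A) ^+ 2 by rewrite /K; ring.
    rewrite A2 hBG subrK s2; ring.
  have eAB : A * cm + B * G = s by rewrite hBG; ring.
  split; first split.
  + by rewrite n2.
  + by rewrite gf0 eAB normrM nub mul1r ger0_norm // s2.
  + move=> f' [hF hq].
    have V0 : 0 <= A * H + B * cm.
      by apply: addr_ge0; apply: mulr_ge0 => //; apply: ltW.
    rewrite hf0 normrM nua mul1r (ger0_norm V0).
    have gi := @gram_ineq _ _ h g f' K0.
    have [Hr eH] := ex_real (gtr0_real hH).
    have [Gr eG] := ex_real (gtr0_real hG).
    have [Fr eF] := ex_real (ger0_real (norm2_ge0 f')).
    have [Pr ePt] := ex_real (gtr0_real hPt).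
    have [er ee] := ex_real (gtr0_real heta).
    have [cr ecm] : exists r : R, cm = (r%:C)%C := ex_real (normr_real c).
    have [pr epp] := ex_real (normr_real (dotc h f')).
    have [qr eqq] := ex_real (normr_real (dotc g f')).
    have [Ar eA] : exists r : R, A = (r%:C)%C := ex_real (normr_real a).
    have [Br eB] : exists r : R, B = (r%:C)%C := ex_real (normr_real b).
    have [sr es] := ex_real (ger0_real s0).
    suff hr : pr ^+ 2 <= (Ar * Hr + Br * cr) ^+ 2.
      rewrite epp eA eH eB ecm.
      by move: hr; rewrite -(@lecR R) !(rmorphXn, rmorphD, rmorphM).
    apply: (@real_main _ Hr Gr Fr Pr er cr pr qr Ar Br sr).
    - apply: ltR; rewrite -eG; exact: hG.
    - apply: ltR; rewrite !(rmorphXn, rmorphD, rmorphB, rmorphN, rmorphM) /= -eH -eG -ecm; exact: K0.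
    - apply: leR; rewrite -eF -ePt; exact: hF.
    - apply: leR; rewrite !(rmorphXn, rmorphD, rmorphB, rmorphM) /= -ee -eqq; exact: hq.
    - apply: eqR; rewrite !(rmorphXn, rmorphD, rmorphB, rmorphM) /= -ee -es; exact: s2.
    - apply: leR; rewrite -es; exact: s0.
    - apply: eqR; rewrite !(rmorphXn, rmorphD, rmorphB, rmorphN, rmorphM) /= -ee -eA -eH -eG -ecm -ePt; exact: A2.
    - apply: eqR; rewrite !(rmorphXn, rmorphD, rmorphB, rmorphN, rmorphM) /= -eB -eA -eG -ecm -es; exact: hBG.
    - apply: leR; rewrite !(rmorphXn, rmorphD, rmorphB, rmorphN, rmorphM, rmorph_nat) /= -eH -eG -ecm -eF -epp -eqq; exact: gi.
    - apply: leR; rewrite -epp; exact: normr_ge0.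
    - apply: leR; rewrite -eqq; exact: normr_ge0.
    - apply: leR; rewrite -eA; exact: normr_ge0.
    - apply: leR; rewrite -eB; exact: normr_ge0.
    - apply: leR; rewrite -ecm; exact: normr_ge0.
- move=> hlt f [hf he].
  have h1 := le_trans he (cs g f).
  have h2 : G * norm2 f <= G * Pt by rewrite ler_pM2l.
  have := lt_le_trans hlt (le_trans h1 h2). by rewrite mulrC ltxx.
Qed.
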